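(* Let $a$ and $b$ be relatively prime integers with $0<a<b$, and let $n=a+b$. Let $\pi$ be the permutation of $\{1,\ldots,n\}$ defined as follows: if $a=1$, $\pi=(2,3,\ldots,b+1,1)$; if $a\ge 2$, $\pi_i$ is the unique element of $\{1,\ldots,n\}$ with $\pi_i\equiv 1+(i-1)a \pmod{a+b}$, for $i=1,\ldots,n$. Let $a'\in\{1,\ldots,a+b-1\}$ be the inverse of $a$ modulo $a+b$, and let $b'=a+b-a'$. Then $(a',-b')$ is a $D$-pair corresponding to the permutation $\pi^{-1}$, i.e. the set of values $\{\pi^{-1}_{j+1}-\pi^{-1}_j : 1\le j\le n-1\}$ equals $\{a',-b'\}$.
   Context: A pair $(p,q)$ of distinct integers is a $D$-pair corresponding to a permutation $\sigma$ of $\{1,\ldots,n\}$ if the set of discrete derivative values $\{\sigma_{i+1}-\sigma_i : 1\le i\le n-1\}$ equals $\{p,q\}$. Here $\pi^{-1}$ denotes the inverse permutation, written as the sequence $(\pi^{-1}_1,\ldots,\pi^{-1}_n)$. *)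

(* Defs.v *)
From mathcomp Require Import all_boot all_order all_algebra all_fingroup.
Set Implicit Arguments. Unset Strict Implicit. Unset Printing Implicit Defensive.

(* Permutations of {1,...,n} are represented 0-based as {perm 'I_n}:
   the 1-based value pi_i corresponds to (val (s (i-1))).+1. *)

Lemma mod_lt_ord (n : nat) (k : 'I_n) (m : nat) : m %% n < n.
Proof. by apply: ltn_pmod; apply: leq_ltn_trans (ltn_ord k). Qed.

(* 0-based version of pi : if a = 1, pi = (2,3,...,b+1,1), i.e. k |-> (k+1) mod n;
   if a >= 2, pi_i = 1 + (i-1)a mod n, i.e. k |-> k*a mod n. *)
Definition pi_fun (a b : nat) (k : 'I_(a + b)) : 'I_(a + b) :=
  Ordinal (mod_lt_ord k (if a == 1 then k.+1 else k * a)).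

Lemma pi_fun_inj (a b : nat) : coprime a b -> injective (@pi_fun a b).
Proof.
move=> cab.
have key : forall c (k l : 'I_(a + b)), coprime (a + b) c -> k <= l ->
    k * c = l * c %[mod a + b] -> k = l.
  move=> c k l cnc kl /eqP; rewrite eq_sym eqn_mod_dvd ?leq_mul2r ?kl ?orbT //.
  rewrite -mulnBl Gauss_dvdl // => /dvdn_leq H; apply/val_inj/eqP.
  rewrite eqn_leq kl /=; case: (ltnP k l) => // lt.
  have := H; rewrite subn_gt0 => /(_ lt) H'.
  have : l - k < a + b by apply: leq_ltn_trans (leq_subr _ _) (ltn_ord l).
  by rewrite ltnNge H'.
have cn : coprime (a + b) a by rewrite /coprime gcdnC gcdnDl.
have cn1 : coprime (a + b) 1 by rewrite coprimen1.
move=> k l /(congr1 val) /=; case: ifP => _ E.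
  have E' : k * 1 = l * 1 %[mod a + b] by apply/eqP; rewrite !muln1 -(eqn_modDr 1) !addn1 E.
  by case: (leqP k l) => kl; [exact: (key _ k l cn1 kl E')|exact: esym (key _ l k cn1 (ltnW kl) (esym E'))].
by case: (leqP k l) => kl; [exact: (key _ k l cn kl E)|exact: esym (key _ l k cn (ltnW kl) (esym E))].
Qed.

Definition pi_perm (a b : nat) (H : coprime a b) : {perm 'I_(a + b)} :=
  perm (pi_fun_inj H).

Definition perm_seq (n : nat) (s : {perm 'I_n}) : seq nat :=
  [seq (val (s i)).+1 | i <- enum 'I_n].

Definition dderiv (s : seq nat) : seq int :=
  [seq ((nth 0 s j.+1)%:Z - (nth 0 s j)%:Z)%R | j <- iota 0 (size s).-1].

Definition Dpair (p q : int) (n : nat) (s : {perm 'I_n}) : Prop :=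
  p != q /\ forall z : int, (z \in dderiv (perm_seq s)) = (z == p) || (z == q).

(* Main.v *)
Require Import Defs.
From mathcomp Require Import all_boot all_order all_algebra all_fingroup.
From mathcomp Require Import zify.
Import GRing.Theory.

Lemma nth_ps n (s : {perm 'I_n}) (k : 'I_n) :
  nth 0 (perm_seq s) k = (val (s k)).+1.
Proof.
rewrite /perm_seq (nth_map k) ?size_enum_ord ?ltn_ord //.
by rewrite nth_ord_enum.
Qed.

Lemma gen n (s : {perm 'I_n}) (a' : nat) :
  0 < a' < n ->
  (forall k l : 'I_n, val l = (val k).+1 -> val (s l) = (val (s k) + a') %% n) ->
  (exists k : 'I_n, k.+1 < n /\ val (s k) + a' < n) ->
  (exists k : 'I_n, k.+1 < n /\ n <= val (s k) + a') ->
  Dpair (a'%:Z) (- ((n - a')%:Z))%R s.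
Proof.
move=> /andP[a0 an] Hs [k1 [k1n H1]] [k2 [k2n H2]].
have sz : size (perm_seq s) = n by rewrite /perm_seq size_map size_enum_ord.
have D : forall k : 'I_n, k.+1 < n ->
  (((nth 0 (perm_seq s) k.+1)%:Z - (nth 0 (perm_seq s) k)%:Z)%R =
   if val (s k) + a' < n then (a'%:Z)%R else (- ((n - a')%:Z))%R).
  move=> k kn; have := Hs k (Ordinal kn) erefl.
  rewrite -[k.+1]/(val (Ordinal kn)) !nth_ps => ->.
  have xn : val (s k) < n := ltn_ord _.
  case: ifP => h.
    rewrite modn_small //; lia.
  move/negbT: h; rewrite -leqNgt => h.
  have -> : val (s k) + a' = (val (s k) + a' - n) + n by lia.
  rewrite modnDr modn_small; lia.
split.
  apply/eqP => /(congr1 (fun z => (0 <= z)%R)); rewrite /=; lia.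
move=> z; rewrite /dderiv sz; apply/mapP/idP.
  move=> [j]; rewrite mem_iota add0n => jn ->.
  have jn' : j < n by lia.
  have jn2 : (Ordinal jn').+1 < n by rewrite /=; lia.
  have := D _ jn2; rewrite /= => ->.
  by case: ifP => _; rewrite eqxx ?orbT.
case/orP => /eqP ->.
  exists (nat_of_ord k1); first by rewrite mem_iota; lia.
  by rewrite D // H1.
exists (nat_of_ord k2); first by rewrite mem_iota; lia.
by rewrite D // ltnNge H2.
Qed.

Theorem corollary2p6 (a b : nat) (cab : coprime a b) :
  0 < a -> a < b ->
  forall a' : nat, 0 < a' < a + b -> a * a' = 1 %[mod a + b] ->
  Dpair (a'%:Z) (- ((a + b - a')%:Z))%R (pi_perm cab)^-1.
Proof.
move=> a0 ab a' ha' Ha'.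
set p := pi_perm cab.
have pE : forall k : 'I_(a + b), val (p k) = (if a == 1 then k.+1 else k * a) %% (a + b).
  by move=> k; rewrite /p /pi_perm permE.
have sP : forall t l : 'I_(a + b), val (p t) = val l -> (p^-1)%g l = t.
  by move=> t l /val_inj <-; rewrite permK.
have n1 : 1 < a + b by lia.
have m1 : 1 %% (a + b) = 1 by rewrite modn_small.
apply: gen => //.
- move=> k l El.
  have ln := ltn_ord l.
  set x := (p^-1)%g k.
  have Hk : val (p x) = val k by rewrite /x permKV.
  have yn : (val x + a') %% (a + b) < a + b by rewrite ltn_mod; lia.
  rewrite (sP (Ordinal yn) l) //= pE /=.
  move: Hk; rewrite pE /=.
  case: eqP => [a1|a2] Hk.
    have a'1 : a' = 1.
      by move: Ha'; rewrite m1 a1 mul1n modn_small; lia.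
    have El' : nat_of_ord l = (nat_of_ord k).+1 := El.
    have ln' : nat_of_ord l < a + b := ltn_ord l.
    rewrite a'1 addn1 El' -Hk modn_small //.
    by rewrite -Hk in El'; lia.
  have El' : nat_of_ord l = (nat_of_ord k).+1 := El.
  have ln' : nat_of_ord l < a + b := ltn_ord l.
  rewrite El' modnMml mulnDl -modnDm (mulnC a' a) Ha' m1 -Hk addn1 modn_small //.
  by rewrite -Hk in El'; lia.
- case: (a =P 1) => [a1|a2].
    have h1 : 1 < a + b by lia.
    have h2 : 0 < a + b by lia.
    exists (Ordinal h1); split; first by rewrite /=; lia.
    rewrite (sP (Ordinal h2)) /=; first by lia.
    by rewrite pE /= a1 eqxx modn_small //; lia.
  have h2 : 0 < a + b by lia.
  exists (Ordinal h2); split; first by rewrite /=; lia.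
  rewrite (sP (Ordinal h2)) /=; first by lia.
  by rewrite pE /=; case: eqP => // _; rewrite mul0n mod0n.
- have h2 : 0 < a + b by lia.
  have h3 : a + b - 1 < a + b by lia.
  case: (a =P 1) => [a1|a2].
    exists (Ordinal h2); split; first by rewrite /=; lia.
    rewrite (sP (Ordinal h3)) /=; first by lia.
    rewrite pE /= a1 eqxx /=.
    have -> : (1 + b - 1).+1 = 1 + b by lia.
    by rewrite modnn.
  have h4 : a + b - a < a + b by lia.
  have a'2 : 1 < a'.
    case: (ltngtP a' 1) => //; first by lia.
    move=> e; move: Ha'; rewrite e muln1 m1 modn_small //; lia.
  exists (Ordinal h4); split; first by rewrite /=; lia.
  rewrite (sP (Ordinal h3)) /=; first by lia.
  rewrite pE /=; case: eqP => // _.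
  have -> : (a + b - 1) * a = (a + b - a) + (a - 1) * (a + b).
    rewrite mulnBl mul1n mulnBl mul1n; nia.
  by rewrite addnC modnMDl modn_small.
Qed.
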